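(* Let $X$ be a complex Banach space. For every $\gamma\in\mathrm{lin}(\Gamma(\mathbb{D}))\otimes X$, $d^{\widehat{\mathcal{B}}}_1(\gamma)=\inf\left\{\sum_{i=1}^n\frac{|\lambda_i|}{1-|z_i|^2}\|x_i\|\right\}$ and $d^{\widehat{\mathcal{B}}}_\infty(\gamma)=\inf\left\{\sup_{g\in B_{\widehat{\mathcal{B}}(\mathbb{D})}}\sum_{i=1}^n|\lambda_i||g'(z_i)|\|x_i\|\right\}$, where both infima are taken over all representations $\gamma=\sum_{i=1}^n\lambda_i\gamma_{z_i}\otimes x_i$.
   Context: $\mathbb{D}=\{z\in\mathbb{C}:|z|<1\}$. $\widehat{\mathcal{B}}(\mathbb{D},Y)$ (for a complex Banach space $Y$) is the Banach space of holomorphic $f:\mathbb{D}\to Y$ with $f(0)=0$ and $p_{\mathcal{B}}(f)=\sup_{z\in\mathbb{D}}(1-|z|^2)\|f'(z)\|<\infty$, normed by $p_{\mathcal{B}}$; $\widehat{\mathcal{B}}(\mathbb{D})=\widehat{\mathcal{B}}(\mathbb{D},\mathbb{C})$ with closed unit ball $B_{\widehat{\mathcal{B}}(\mathbb{D})}$. For $z\in\mathbb{D}$, $x\in X$, $\gamma_z\otimes x$ is the functional on $\widehat{\mathcal{B}}(\mathbb{D},X^* )$ given by $(\gamma_z\otimes x)(f)=\langle f'(z),x\rangle$, and $\mathrm{lin}(\Gamma(\mathbb{D}))\otimes X$ is the linear span of all $\gamma_z\otimes x$ in $\widehat{\mathcal{B}}(\mathbb{D},X^* )^*$, with elements written $\sum_{i=1}^n\lambda_i\gamma_{z_i}\otimes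 x_i$ (non-uniquely). With infima over all such representations of $\gamma$: $d^{\widehat{\mathcal{B}}}_1(\gamma)=\inf\left(\sup_{g\in B_{\widehat{\mathcal{B}}(\mathbb{D})}}\max_{1\leq i\leq n}|\lambda_i||g'(z_i)|\right)\left(\sum_{i=1}^n\|x_i\|\right)$ and $d^{\widehat{\mathcal{B}}}_\infty(\gamma)=\inf\left(\sup_{g\in B_{\widehat{\mathcal{B}}(\mathbb{D})}}\sum_{i=1}^n|\lambda_i||g'(z_i)|\right)\left(\max_{1\leq i\leq n}\|x_i\|\right)$. *)

(* Defs.v *)
From HB Require Import structures.
From mathcomp Require Import all_boot all_order all_algebra.
From mathcomp Require Import all_classical all_reals all_analysis.
From mathcomp Require Import complex.
Set Implicit Arguments. Unset Strict Implicit. Unset Printing Implicit Defensive.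
Import Order.TTheory GRing.Theory Num.Theory ComplexField.
Import numFieldTopology.Exports numFieldNormedType.Exports.
Local Open Scope classical_set_scope.

HB.instance Definition _ (R : realType) := PseudoPointedMetric.copy R[i] (R[i])^o.
HB.instance Definition _ (R : realType) := NormedModule.copy R[i] (R[i])^o.
Local Open Scope ring_scope.
Local Open Scope complex_scope.

Section Bloch.
Variables (R : realType) (X : normedModType R[i]).
Local Notation C := R[i].

Definition inD (z : C) : Prop := `|z| < 1.

(* real-valued norm of a vector of X (the norm of a normedModType over C
   takes values in C; it is real, we take its real part) *)
Definition nrm (x : X) : R := complex.Re `|x|.

Definition is_dual (phi : X -> C) : Prop :=
  (forall (a : C) (x y : X), phi (a *: x + y) = a * phi x + phi y) /\ exists M : C, forall x, `|phi x| <= M * `|x|.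

(* f : D -> X^* (represented pointwise: f z x = <f(z), x>) is holomorphic on D
   with derivative f' (in the operator norm of X^* ), f(0)=0, and its Bloch
   seminorm p_B(f) = sup_z (1-|z|^2)||f'(z)|| is finite:
   f belongs to \hat{B}(D, X^* ) with derivative f'. *)
Definition bloch_vec (f f' : C -> X -> C) : Prop :=
  (forall z, inD z -> is_dual (f z) /\ is_dual (f' z)) /\
  (forall z, inD z -> forall e : C, 0 < e ->
     \forall h \near (0 : C)^',
       forall x, `|(f (z + h) x - f z x) / h - f' z x| <= e * `|x|) /\
  (forall x, f 0 x = 0) /\
  (exists M : C, forall z, inD z -> forall x,
     (1 - `|z| ^+ 2) * `|f' z x| <= M * `|x|).

Definition bloch_ball (g g' : C -> C) : Prop :=
  (forall z, inD z -> (fun h => (g (z + h) - g z) / h) @ (0 : C)^' --> g' z) /\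
  g 0 = 0 /\
  (forall z, inD z -> (1 - `|z| ^+ 2) * `|g' z| <= 1).

(* a representation sum_{i<n} lambda_i gamma_{z_i} (x) x_i, z_i in D *)
Record rep := Rep {
  rn : nat;
  rlam : 'I_rn -> C;
  rz : 'I_rn -> C;
  rzD : forall i, inD (rz i);
  rx : 'I_rn -> X }.
Arguments rlam : clear implicits.
Arguments rzD : clear implicits.
Arguments rz : clear implicits.
Arguments rx : clear implicits.

(* action of the represented functional on f in \hat{B}(D,X^* ) with derivative f' *)
Definition rep_act (r : rep) (f' : C -> X -> C) : C :=
  \sum_(i < rn r) rlam r i * f' (rz r i) (rx r i).

(* two representations represent the same element of lin(Gamma(D)) (x) X *)
Definition same_elt (r s : rep) : Prop :=
  forall f f', bloch_vec f f' -> rep_act r f' = rep_act s f'.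

Local Open Scope ereal_scope.

Definition sup_max (r : rep) : \bar R :=
  ereal_sup [set (\big[Order.max/0%R]_(i < rn r)
                   complex.Re (`|rlam r i| * `|g' (rz r i)|))%:E
            | g' in [set g' | exists g, bloch_ball g g']].

Definition sup_sum (r : rep) : \bar R :=
  ereal_sup [set (\sum_(i < rn r) complex.Re (`|rlam r i| * `|g' (rz r i)|))%:E
            | g' in [set g' | exists g, bloch_ball g g']].

Definition d1 (r : rep) : \bar R :=
  ereal_inf [set sup_max s * (\sum_(i < rn s) nrm (rx s i))%:E | s in same_elt r].

Definition dinf (r : rep) : \bar R :=
  ereal_inf [set sup_sum s * (\big[Order.max/0%R]_(i < rn s) nrm (rx s i))%:E
            | s in same_elt r].

Definition d1_alt (r : rep) : \bar R :=
  ereal_inf [set (\sum_(i < rn s)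
                   complex.Re (`|rlam s i| / (1 - `|rz s i| ^+ 2)) * nrm (rx s i))%:E
            | s in same_elt r].

Definition dinf_alt (r : rep) : \bar R :=
  ereal_inf [set ereal_sup
                 [set (\sum_(i < rn s)
                        complex.Re (`|rlam s i| * `|g' (rz s i)|) * nrm (rx s i))%:E
                 | g' in [set g' | exists g, bloch_ball g g']]
            | s in same_elt r].

End Bloch.

(* Main.v *)
Require Import Defs.
From HB Require Import structures.
From mathcomp Require Import all_boot all_order all_algebra.
From mathcomp Require Import all_classical all_reals all_analysis.
From mathcomp Require Import complex.
From mathcomp Require Import ring.
Set Implicit Arguments. Unset Strict Implicit. Unset Printing Implicit Defensive.
Import Order.TTheory GRing.Theory Num.Theory ComplexField.
Import numFieldTopology.Exports numFieldNormedType.Exports.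
Local Open Scope classical_set_scope.
Local Open Scope ring_scope.
Section S.

Variable R : realType.
Local Notation C := R[i].
Lemma q_cont (k b c : C) (hb : 1 - b * c != 0) :
  (fun h : C => k / ((1 - b * (c + h)) * (1 - b * c))) @ (0:C)^' --> k / ((1 - b * c) * (1 - b*c)).
Proof.
apply: cvg_within_filter.
apply: cvgM; first exact: cvg_cst.
apply: cvgV; first by rewrite mulf_neq0.
apply: cvgM; last exact: cvg_cst.
apply: cvgB; first exact: cvg_cst.
apply: cvgM; first exact: cvg_cst.
rewrite -{2}[c]addr0; apply: cvgD; [exact: cvg_cst|exact: cvg_id].
Qed.

Lemma D_neq0 (a w : C) : inD a -> inD w -> 1 - a^* * w != 0.
Proof.
rewrite /inD => ha hw; rewrite subr_eq0; apply/eqP => E.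
have : `|a^* * w| < 1.
  rewrite normrM norm_conjC; apply: (le_lt_trans _ ha).
  by rewrite -[X in _ <= X]mulr1; apply: ler_wpM2l => //; exact: ltW.
by rewrite -E normr1 ltxx.
Qed.

Definition mg (a : C) := fun w : C => (1 - `|a|^+2) * w / (1 - a^* * w).
Definition mg' (a : C) := fun w : C => (1 - `|a|^+2) / (1 - a^* * w)^+2.

Lemma mob_ball (a : C) : inD a -> bloch_ball (mg a) (mg' a).
Proof.
move=> ha; split; [|split].
- move=> z hz.
  have D0 := D_neq0 ha hz.
  rewrite /mg' expr2.
  apply: cvg_trans _ (@q_cont (1 - `|a|^+2) _ _ D0).
  apply: near_eq_cvg.
  near=> h.
  have h0 : h != 0 by near: h; exact: nbhs_dnbhs_neq.
  have hs : `|h| < 1 - `|z| by near: h; apply: cvg_within; apply: nbhs0_lt; rewrite subr_gt0.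
  have hzh : inD (z + h).
    rewrite /inD; apply: (le_lt_trans (ler_normD _ _)); by rewrite -ltrBrDl.
  have D1 := D_neq0 ha hzh.
  rewrite /mg /=.
  field.
  by rewrite D1 D0 h0.
- by rewrite /mg mulr0 mul0r.
- move=> z hz.
  have D0 := D_neq0 ha hz.
  have k0 : 0 <= 1 - `|a| ^+ 2.
    rewrite subr_ge0 -[X in _ <= X](expr1n _ 2); apply: lerXn2r; rewrite ?nnegrE //.
    exact: ltW.
  rewrite /mg' normrM normfV normrX (ger0_norm k0) mulrA.
  rewrite ler_pdivrMr; last by rewrite exprn_gt0 // normr_gt0.
  rewrite mul1r -subr_ge0.
  have -> : `|1 - a^* * z| ^+ 2 - (1 - `|z| ^+ 2) * (1 - `|a| ^+ 2) = `|z - a| ^+ 2.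
    rewrite !normCK !rmorphB !rmorphM rmorph1 /= ?conjCK.
    ring.
  exact: exprn_ge0.
Unshelve. all: by end_near.
Qed.

Lemma Im_ge0 (u : C) : 0 <= u -> complex.Im u = 0.
Proof. by rewrite lecE => /andP[/eqP E _]; rewrite E. Qed.

Lemma Re_ge0 (u : C) : 0 <= u -> 0 <= complex.Re u.
Proof. by rewrite lecE => /andP[_]. Qed.

Lemma Re_le (u v : C) : u <= v -> complex.Re u <= complex.Re v.
Proof. by rewrite lecE => /andP[_]. Qed.

Lemma Re_mulr (u v : C) : complex.Im v = 0 ->
  complex.Re (u * v) = complex.Re u * complex.Re v.
Proof. by case: u => ur ui; case: v => vr vi /= ->; rewrite mulr0 subr0. Qed.

Lemma Re1 : complex.Re (1 : C) = 1.
Proof. by []. Qed.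

Lemma dpos (z : C) : inD z -> 0 < 1 - `|z| ^+ 2.
Proof.
move=> hz; rewrite subr_gt0 expr2; apply: (le_lt_trans _ hz).
by rewrite -[X in _ <= X]mulr1; apply: ler_wpM2l => //; exact: ltW.
Qed.

Lemma ball_bound (g g' : C -> C) z : bloch_ball g g' -> inD z ->
  `|g' z| <= 1 / (1 - `|z| ^+ 2).
Proof.
move=> [_ [_ B]] hz; rewrite ler_pdivlMr ?dpos // mulrC; exact: B.
Qed.

Lemma inD0 : inD (0 : C).
Proof. by rewrite /inD normr0. Qed.

Lemma mg'_at (a : C) : inD a -> `|mg' a a| = 1 / (1 - `|a| ^+ 2).
Proof.
move=> ha; have k0 := dpos ha.
rewrite /mg' -normCKC ger0_norm; last first.
  by apply: divr_ge0; [exact: ltW | exact: exprn_ge0 (ltW k0)].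
by field; rewrite gt_eqF.
Qed.

Lemma aux (L D : C) : L != 0 -> D != 0 -> L / (L / D) * (1 / D) = 1.
Proof. by move=> L0 D0; field; rewrite L0 D0. Qed.

Variable X : normedModType C.

Lemma dual0 (phi : X -> C) : is_dual phi -> phi 0 = 0.
Proof.
move=> [L _]; have E := L 1 0 0; rewrite scaler0 addr0 mul1r in E.
have : phi 0 + phi 0 - phi 0 = phi 0 - phi 0 by rewrite -E.
by rewrite addrK subrr.
Qed.

Lemma dualZ (phi : X -> C) c x : is_dual phi -> phi (c *: x) = c * phi x.
Proof.
move=> hp; have E := hp.1 c x 0; by rewrite addr0 (dual0 hp) addr0 in E.
Qed.

Lemma same_scale (s : rep X) (lam' : 'I_(rn s) -> C) (x' : 'I_(rn s) -> X) :
  (forall i phi, is_dual phi -> lam' i * phi (x' i) = rlam (r:=s) i * phi (rx (r:=s) i)) ->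
  forall r, same_elt r s -> same_elt r (@Rep _ X (rn s) lam' (@rz _ _ s) (@rzD _ _ s) x').
Proof.
move=> H r Hs f f' hf; rewrite (Hs f f' hf) /rep_act /=; apply: eq_bigr => i _.
by rewrite H //; exact: (hf.1 _ (rzD (r:=s) i)).2.
Qed.

Lemma nrm_ge0 (x : X) : 0 <= nrm x.
Proof. exact: Re_ge0. Qed.

Local Open Scope ereal_scope.

Lemma sup_max_ge0 (s : rep X) : 0 <= sup_max s.
Proof.
apply: le_ereal_sup_tmp; eexists.
  by exists (mg' (0%R : C)) => //; exists (mg (0%R : C)); exact: mob_ball inD0.
by rewrite lee_fin; exact: bigmax_ge_id.
Qed.

Lemma sup_sum_ge0 (s : rep X) : 0 <= sup_sum s.
Proof.
apply: le_ereal_sup_tmp; eexists.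
  by exists (mg' (0%R : C)) => //; exists (mg (0%R : C)); exact: mob_ball inD0.
rewrite lee_fin; apply: sumr_ge0 => i _; apply: Re_ge0.
by apply: mulr_ge0.
Qed.

Definition cc (s : rep X) i : C := (`|rlam (r:=s) i| / (1 - `|rz (r:=s) i| ^+ 2))%R.
Arguments cc : clear implicits.

Lemma cc_ge0 s i : (0 <= cc s i)%R.
Proof. by apply: divr_ge0 => //; apply: ltW; apply: dpos; exact: rzD. Qed.
Arguments cc_ge0 : clear implicits.

Definition s1 (s : rep X) : rep X :=
  @Rep _ X (rn s) (fun i => (rlam (r:=s) i / cc s i)%R) (@rz _ _ s) (@rzD _ _ s)
    (fun i => cc s i *: rx (r:=s) i).

Lemma s1_same s r : same_elt r s -> same_elt r (s1 s).
Proof.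
apply: same_scale => i phi hphi; rewrite dualZ //.
have [->|h] := eqVneq (rlam (r:=s) i) 0%R; first by rewrite !mul0r.
have c0 : cc s i != 0%R.
  by rewrite /cc mulf_neq0 ?normr_eq0 // invr_eq0 gt_eqF // dpos //; exact: rzD.
by rewrite mulrA divfK.
Qed.

Lemma s1_sup s : sup_max (s1 s) <= 1%:E.
Proof.
apply: ge_ereal_sup => _ [g' [g hg] <-]; rewrite lee_fin.
apply: bigmax_le => // i _; rewrite -Re1; apply: Re_le.
change (rlam (r:=s1 s) i) with (rlam (r:=s) i / cc s i)%R.
change (rz (r:=s1 s) i) with (rz (r:=s) i).
apply: le_trans (ler_wpM2l (normr_ge0 _) (ball_bound hg (rzD (r:=s) i))) _.
have d0 := dpos (rzD (r:=s) i).
have [->|h] := eqVneq (rlam (r:=s) i) 0%R; first by rewrite !mul0r normr0 mul0r.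
rewrite normf_div (ger0_norm (cc_ge0 s i)) /cc.
by rewrite aux //; [rewrite normr_eq0 | rewrite gt_eqF].
Qed.

Lemma s1_sum s : (\sum_(i < rn (s1 s)) nrm (rx (r:=(s1 s)) i) =
  \sum_(i < rn s) complex.Re (`|rlam (r:=s) i| / (1 - `|rz (r:=s) i| ^+ 2)) * nrm (rx (r:=s) i))%R.
Proof.
apply: eq_bigr => i _; rewrite /nrm.
change (rx (r:=s1 s) i) with (cc s i *: rx (r:=s) i)%R.
rewrite normrZ (ger0_norm (cc_ge0 s i)) Re_mulr; first by rewrite /cc.
exact: Im_ge0.
Qed.

Lemma d1_eq (r : rep X) : d1 r = d1_alt r.
Proof.
apply/le_anti/andP; split.
- apply: le_ereal_inf_tmp => _ [s hs <-].
  apply: le_trans (ereal_inf_lbound _) _.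
    by exists (s1 s) => //; exact: s1_same.
  rewrite s1_sum; apply: le_trans (lee_wpmul2r _ (s1_sup s)) _.
    rewrite lee_fin; apply: sumr_ge0 => i _; apply: mulr_ge0; last exact: nrm_ge0.
    exact: Re_ge0 (cc_ge0 s i).
  by rewrite mul1e.
- apply: le_ereal_inf_tmp => _ [s hs <-].
  apply: le_trans (ereal_inf_lbound _) _; first by exists s.
  set M := (\big[Order.max/0%R]_(i < rn s) complex.Re (cc s i))%R.
  apply: (@le_trans _ _ (M%:E * (\sum_(i < rn s) nrm (rx (r:=s) i))%:E)).
    rewrite -EFinM lee_fin mulr_sumr; apply: ler_sum => i _.
    apply: ler_wpM2r; first exact: nrm_ge0.
    exact: (le_bigmax _ (fun i => complex.Re (cc s i))).
  apply: lee_wpmul2r; first by rewrite lee_fin; apply: sumr_ge0 => i _; exact: nrm_ge0.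
  rewrite /M; elim/big_ind: _.
  + exact: sup_max_ge0.
  + by move=> x y hx hy; rewrite /Order.max; case: ifP.
  + move=> i _; apply: le_ereal_sup_tmp; eexists.
      by exists (mg' (rz (r:=s) i)) => //; exists (mg (rz (r:=s) i)); exact: mob_ball (rzD (r:=s) i).
    rewrite lee_fin; apply: le_trans (le_bigmax _ _ i); apply: Re_le.
    rewrite mg'_at; last exact: rzD.
    by rewrite /cc mul1r.
Qed.

Definition s2 (s : rep X) : rep X :=
  @Rep _ X (rn s) (fun i => (rlam (r:=s) i * `|rx (r:=s) i|)%R) (@rz _ _ s) (@rzD _ _ s)
    (fun i => (`|rx (r:=s) i|^-1 *: rx (r:=s) i)%R).

Lemma s2_same s r : same_elt r s -> same_elt r (s2 s).
Proof.
apply: same_scale => i phi hphi.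
have [E|h] := eqVneq (rx (r:=s) i) (0%R : X).
  by rewrite E scaler0 (dual0 hphi) !mulr0.
by rewrite dualZ // mulrA -(mulrA _ (`|rx (r:=s) i|)%R) mulfV ?mulr1 // normr_eq0.
Qed.

Lemma s2_K s (g' : C -> C) :
  (\sum_(i < rn (s2 s)) complex.Re (`|rlam (r:=(s2 s)) i| * `|g' (rz (r:=(s2 s)) i)|) =
   \sum_(i < rn s) complex.Re (`|rlam (r:=s) i| * `|g' (rz (r:=s) i)|) * nrm (rx (r:=s) i))%R.
Proof.
apply: eq_bigr => i _.
change (rlam (r:=s2 s) i) with (rlam (r:=s) i * `|rx (r:=s) i|)%R.
change (rz (r:=s2 s) i) with (rz (r:=s) i).
rewrite normrM normr_id mulrAC Re_mulr; first by rewrite /nrm.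
exact: Im_ge0.
Qed.

Lemma s2_max s : (\big[Order.max/0%R]_(i < rn (s2 s)) nrm (rx (r:=(s2 s)) i) <= 1)%R.
Proof.
apply: bigmax_le => // i _.
change (rx (r:=s2 s) i) with (`|rx (r:=s) i|^-1 *: rx (r:=s) i)%R.
rewrite /nrm normrZ normfV normr_id -Re1.
apply: Re_le; have [E|h] := eqVneq (`|rx (r:=s) i|)%R 0%R.
  by rewrite E invr0 mul0r.
by rewrite mulVf.
Qed.

Lemma dinf_eq (r : rep X) : dinf r = dinf_alt r.
Proof.
apply/le_anti/andP; split.
- apply: le_ereal_inf_tmp => _ [s hs <-].
  apply: le_trans (ereal_inf_lbound _) _.
    by exists (s2 s) => //; exact: s2_same.
  apply: (@le_trans _ _ (sup_sum (s2 s) * 1)).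
    apply: lee_wpmul2l; first exact: sup_sum_ge0.
    by rewrite lee_fin; exact: s2_max.
  rewrite mule1 /sup_sum; apply: ereal_sup_le => _ [g' hg' <-].
  by exists g' => //; rewrite s2_K.
- apply: le_ereal_inf_tmp => _ [s hs <-].
  apply: le_trans (ereal_inf_lbound _) _; first by exists s.
  set Mx := (\big[Order.max/0%R]_(i < rn s) nrm (rx (r:=s) i))%R.
  apply: ge_ereal_sup => _ [g' hg' <-].
  apply: (@le_trans _ _ ((\sum_(i < rn s) complex.Re (`|rlam (r:=s) i| * `|g' (rz (r:=s) i)|)) * Mx)%:E).
    rewrite lee_fin mulr_suml; apply: ler_sum => i _.
    apply: ler_wpM2l; first by apply: Re_ge0; apply: mulr_ge0.
    exact: (le_bigmax _ (fun i => nrm (rx (r:=s) i))).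
  rewrite EFinM; apply: lee_wpmul2r; first by rewrite lee_fin; exact: bigmax_ge_id.
  by apply: ereal_sup_ubound; exists g'.
Qed.

End S.

Theorem proposition2p7 (R : realType) (X : completeNormedModType R[i])
  (r : rep X) :
  d1 r = d1_alt r /\ dinf r = dinf_alt r.
Proof. by split; [exact: d1_eq | exact: dinf_eq]. Qed.
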